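(* For a parking graph $P$ on $[n]$, let $\mathbf{d}(P)=(d_1,\dots,d_n)$ where $d_i$ is the number of directed edges (up or down edges) of $P$ pointing into vertex $i$ (downish edges are not counted), and set $\phi(P):=\mathbf{d}(P)+(1,1,\dots,1)$. Then $\phi$ is a bijection from the set of parking graphs on $[n]$ to the set of parking functions of length $n$.
   Context: A parking function of length $n$ is a sequence $(x_1,\dots,x_n)$ of positive integers which, when rearranged in weakly increasing order $x_{(1)}\le\dots\le x_{(n)}$, satisfies $x_{(k)}\le k$ for all $k$; equivalently, it is componentwise at most some permutation of $(1,2,\dots,n)$. A mixed graph may contain both undirected and directed edges. A parking graph $P$ on $[n]$ is a mixed graph with vertex set $[n]$ in which every pair $\{j,k\}$ with $1\le j<k\le n$ is joined by exactly one edge, which is of exactly one of three types: a down edge $j\leftarrow k$ (directed from $k$ to $j$), an up edge $j\rightarrow k$ (directed from $j$ to $k$), or a downish edge $jk$ (undirected). Let $\vec P$ be the directed graph obtained from $P$ by keeping all directed edges and replacing every downish edge $jk$ ($j<k$) by the directed edge $j\leftarrow k$. $P$ must satisfy the source-sink condition: (i) $\vec P$ is acyclic, and (ii) for every triangle of $P$ among whose three edges there is at least one down edge and at least one downish edge, the source (vertex of in-degree $0$ within the triangle in $\vec P$) and the sink (vertex of out-degree $0$ within the triangle in $\vec P$) are not joined by a downish edge in $P$. *)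

(* Defs.v *)
From HB Require Import structures.
From mathcomp Require Import all_boot.
Set Implicit Arguments. Unset Strict Implicit. Unset Printing Implicit Defensive.

(* Edge types of a parking graph, for a pair j < k:
   Down    : j <- k  (directed from k to j)
   Up      : j -> k  (directed from j to k)
   Downish : undirected edge jk *)
Inductive etype := Down | Up | Downish.

Definition etype_code (e : etype) : 'I_3 :=
  match e with Down => inord 0 | Up => inord 1 | Downish => inord 2 end.
Definition etype_decode (i : 'I_3) : etype :=
  match val i with 0 => Down | 1 => Up | _ => Downish end.
Lemma etype_codeK : cancel etype_code etype_decode.
Proof. by case; rewrite /etype_decode /= inordK. Qed.
HB.instance Definition _ := Equality.copy etype (can_type etype_codeK).
HB.instance Definition _ := Finite.copy etype (can_type etype_codeK).

(* Vertex set [n] is modelled by 'I_n (vertex i+1 <-> ordinal i; order preserved). *)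
(* Unordered pairs {j,k} are the ordered pairs with j < k. *)
Definition pairs (n : nat) := {p : 'I_n * 'I_n | p.1 < p.2}.

Definition mgraph (n : nat) := {ffun pairs n -> etype}.

(* Type of the edge {j,k}, for j < k (dummy value otherwise). *)
Definition ed n (G : mgraph n) (j k : 'I_n) : etype :=
  match insub (j, k) : option (pairs n) with Some p => G p | None => Down end.

Definition kind n (G : mgraph n) (u v : 'I_n) : etype :=
  if u < v then ed G u v else ed G v u.

(* Arc u -> v in the directed graph vec P (downish edges jk, j<k, become j <- k). *)
Definition arc n (G : mgraph n) : rel 'I_n := fun u v =>
  if u < v then ed G u v == Up
  else if v < u then ed G v u != Up
  else false.

Definition acyclicb n (G : mgraph n) : bool :=
  [forall u, forall v, arc G u v ==> ~~ connect (arc G) v u].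

Definition triangle_condb n (G : mgraph n) : bool :=
  [forall a, forall b, forall c,
     [&& arc G a b, arc G b c & arc G a c] ==>
     (Down \in [:: kind G a b; kind G b c; kind G a c]) ==>
     (Downish \in [:: kind G a b; kind G b c; kind G a c]) ==>
     (kind G a c != Downish)].

Definition parking_graph n (G : mgraph n) : bool := acyclicb G && triangle_condb G.

Definition indeg n (G : mgraph n) (i : 'I_n) : nat :=
  #|[set j | arc G j i && (kind G j i != Downish)]|.

Definition phi n (G : mgraph n) : n.-tuple nat := [tuple (indeg G i).+1 | i < n].

Definition parking_function n (x : n.-tuple nat) : bool :=
  all (fun a => 0 < a) x &&
  [forall k : 'I_n, nth 0 (sort leq x) k <= k.+1].

(* Main.v *)
Require Import Defs.
From mathcomp Require Import all_boot.
Set Implicit Arguments. Unset Strict Implicit. Unset Printing Implicit Defensive.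
Local Notation arc := Defs.arc.

Lemma count_tuple n (x : n.-tuple nat) (P : pred nat) :
  count P x = #|[set i : 'I_n | P (tnth x i)]|.
Proof.
rewrite -sum1_count -[in LHS](map_tnth_enum x) big_map -sum1dep_card.
by rewrite big_enum_cond.
Qed.

Lemma card_ltn n m : m <= n -> #|[set i : 'I_n | i < m]| = m.
Proof.
elim: m => [|m IH] lt.
  by apply/eqP; rewrite cards_eq0; apply/eqP/setP => i; rewrite !inE.
have -> : [set i : 'I_n | i < m.+1] = Ordinal lt |: [set i : 'I_n | i < m].
  by apply/setP => i; rewrite !inE ltnS leq_eqVlt -val_eqE.
rewrite cardsU1 IH ?(ltnW lt) // inE /= ltnn; by [].
Qed.

Lemma sort_nth_le (s : seq nat) k b :
  k < count (fun a => a <= b) s -> nth 0 (sort leq s) k <= b.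
Proof.
move=> hk.
set s' := sort leq s.
have ss : sorted leq s' by apply: sort_sorted; exact: leq_total.
have cs : count (fun a => a <= b) s' = count (fun a => a <= b) s.
  by apply/permP; rewrite perm_sort.
have hsz : k < size s'.
  by rewrite size_sort; apply: leq_trans hk (count_size _ _).
rewrite leqNgt; apply/negP => hb.
have : count (fun a => a <= b) s' <= k.
  rewrite -(cat_take_drop k s') count_cat.
  have -> : count (fun a => a <= b) (drop k s') = 0.
    apply/eqP; rewrite -leqn0 leqNgt -has_count; apply/hasP => -[y yin yb].
    rewrite (drop_nth 0 hsz) in yin.
    have := ss; rewrite -(cat_take_drop k s') (drop_nth 0 hsz) => /cat_sorted2 [_].
    move=> /= /(order_path_min leq_trans) /allP hall.
    rewrite inE in yin; case/orP: yin => [/eqP yeq|/hall].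
      by move: yb; rewrite yeq leqNgt hb.
    by move=> le; move: yb; rewrite leqNgt (leq_trans hb le).
  rewrite addn0; apply: (leq_trans (count_size _ _)).
  by rewrite size_take hsz.
by rewrite cs leqNgt hk.
Qed.

Lemma sort_nth_count (s : seq nat) k b :
  k < size s -> nth 0 (sort leq s) k <= b -> k < count (fun a => a <= b) s.
Proof.
move=> hk hb.
set s' := sort leq s.
have ss : sorted leq s' by apply: sort_sorted; exact: leq_total.
have cs : count (fun a => a <= b) s' = count (fun a => a <= b) s.
  by apply/permP; rewrite perm_sort.
have hsz : k < size s' by rewrite size_sort.
rewrite -cs -(cat_take_drop k.+1 s') count_cat.
apply: leq_trans (leq_addr _ _).
have -> : count (fun a => a <= b) (take k.+1 s') = size (take k.+1 s').
  apply/eqP; rewrite -all_count; apply/(all_nthP 0) => i.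
  rewrite size_takel // => hi.
  rewrite nth_take //.
  apply: leq_trans hb.
  apply: (sorted_leq_nth leq_trans leqnn 0 ss) => //; rewrite inE.
    by apply: leq_trans hi _.
by rewrite size_takel.
Qed.

Definition ebeq x y := match x,y with Down,Down|Up,Up|Downish,Downish => true | _,_ => false end.
Lemma etype_eqE x y : (x == y) = ebeq x y.
Proof. apply/idP/idP => [/eqP->|]; first by case: y. by case: x; case: y. Qed.

Definition Zs n (d : 'I_n -> nat) (A B : {set 'I_n}) : {set 'I_n} :=
  [set v | (v \notin A) && (d v == #|[set u in A | u < v]| + #|[set u in B | v < u]|)].

Lemma Zs_eq n (d1 d2 : 'I_n -> nat) A B : d1 =1 d2 -> Zs d1 A B = Zs d2 A B.
Proof. by move=> e; apply/setP => v; rewrite !inE e. Qed.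

Lemma card_ltS (T : finType) (A B : {set T}) x :
  A \subset B -> x \in B -> x \notin A -> #|A| < #|B|.
Proof. by move=> sAB xB xA; apply: proper_card; apply/properP; split => //; exists x. Qed.

Section Graph.
Variable n : nat.
Variable G : mgraph n.
Implicit Types u v a b c : 'I_n.

Definition Dr a c := (c < a) && (ed G c a == Down).
Definition pos u := #|[set j | arc G j u]|.

Lemma arc_irr u : arc G u u = false.
Proof. by rewrite /arc ltnn. Qed.

Lemma arc_lt u v : u < v -> arc G u v = (ed G u v == Up).
Proof. by rewrite /arc => ->. Qed.

Lemma arc_gt u v : v < u -> arc G u v = (ed G v u != Up).
Proof. by rewrite /arc => h; rewrite ltnNge (ltnW h) /= h. Qed.

Lemma kind_lt u v : u < v -> kind G u v = ed G u v.
Proof. by rewrite /kind => ->. Qed.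

Lemma kind_gt u v : v < u -> kind G u v = ed G v u.
Proof. by rewrite /kind => h; rewrite ltnNge (ltnW h). Qed.

Lemma arc_tot u v : u != v -> arc G u v || arc G v u.
Proof.
move=> ne; case: (ltngtP u v) => h.
- by rewrite (arc_lt h) (arc_gt h) orbN.
- by rewrite (arc_gt h) (arc_lt h) orbC orbN.
- by move: ne; rewrite (ord_inj h) eqxx.
Qed.

Lemma arc_asym u v : arc G u v -> arc G v u = false.
Proof.
case: (ltngtP u v) => [h|h|/val_inj ->]; last by rewrite arc_irr.
  by rewrite (arc_lt h) (arc_gt h) => ->.
by rewrite (arc_gt h) (arc_lt h) => /negbTE.
Qed.

Lemma Dr_arc a c : Dr a c -> arc G a c.
Proof. by case/andP=> h /eqP e; rewrite (arc_gt h) e etype_eqE. Qed.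

Lemma Dr_lt a c : Dr a c -> c < a.
Proof. by case/andP. Qed.

Hypothesis acG : acyclicb G.
Hypothesis trG : triangle_condb G.

Lemma arc_trans a b c : arc G a b -> arc G b c -> arc G a c.
Proof.
move=> ab bc.
have ac : a != c by apply/eqP => eac; move: bc; rewrite -eac (arc_asym ab).
case/orP: (arc_tot ac) => // ca.
move/forallP: acG => /(_ a) /forallP /(_ b) /implyP /(_ ab) /negP [].
by apply: (connect_trans (connect1 bc)); apply: connect1.
Qed.

Lemma pos_lt u v : arc G u v -> pos u < pos v.
Proof.
move=> uv; apply: proper_card; apply/properP; split.
  by apply/subsetP => j; rewrite !inE => ju; apply: arc_trans ju uv.
by exists u; rewrite !inE ?uv ?arc_irr.
Qed.

Lemma arc_pos u v : arc G u v = (pos u < pos v).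
Proof.
case uv: (arc G u v); first by rewrite pos_lt.
case: (eqVneq u v) => [->|ne]; first by rewrite ltnn.
have := arc_tot ne; rewrite uv /= => /pos_lt h.
by apply/esym/negbTE; rewrite -leqNgt ltnW.
Qed.

Lemma pos_inj : injective pos.
Proof.
move=> u v e; apply/eqP; apply/negPn/negP => ne.
by case/orP: (arc_tot ne); rewrite arc_pos e ltnn.
Qed.

Lemma pos_ltn u : pos u < n.
Proof.
rewrite -[n]card_ord; apply: proper_card; apply/properP; split; first exact: subset_predT.
by exists u; rewrite ?inE ?arc_irr.
Qed.

Definition posO u : 'I_n := Ordinal (pos_ltn u).

Lemma posO_inj : injective posO.
Proof. by move=> u v /(congr1 val) /= /pos_inj. Qed.

Lemma pos_onto t : t < n -> exists u, pos u = t.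
Proof.
move=> tn; have := inj_card_onto posO_inj (leqnn _) (Ordinal tn).
by case/codomP => u /(congr1 val) /= ->; exists u.
Qed.

Lemma card_pos m : m <= n -> #|[set u | pos u < m]| = m.
Proof.
move=> mn; transitivity #|posO @^-1: [set i : 'I_n | i < m]|.
  by apply: eq_card => u; rewrite !inE.
by rewrite card_preimset ?card_ltn //; exact: posO_inj.
Qed.


Lemma C1 a b c : Dr b c -> arc G a b -> c < a -> Dr a c.
Proof.
move=> bc ab ca; have ac := arc_trans ab (Dr_arc bc).
apply/andP; split => //.
move/forallP: trG => /(_ a) /forallP /(_ b) /forallP /(_ c).
have ebc : ed G c b = Down by case/andP: bc => _ /eqP.
rewrite ab (Dr_arc bc) ac (kind_gt ca) (kind_gt (Dr_lt bc)) ebc /= !inE eqxx orbT /=.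
have nu : ed G c a != Up by rewrite -(arc_gt ca).
move: nu; case: (ed G c a); by rewrite !etype_eqE /= ?orbT.
Qed.

Lemma C2 a b c : Dr a b -> arc G b c -> c < a -> Dr a c.
Proof.
move=> ab bc ca; have ac := arc_trans (Dr_arc ab) bc.
apply/andP; split => //.
move/forallP: trG => /(_ a) /forallP /(_ b) /forallP /(_ c).
have eab : ed G b a = Down by case/andP: ab => _ /eqP.
rewrite (Dr_arc ab) bc ac (kind_gt ca) (kind_gt (Dr_lt ab)) eab /= !inE eqxx /=.
have nu : ed G c a != Up by rewrite -(arc_gt ca).
move: nu; case: (ed G c a); by rewrite !etype_eqE /= ?orbT.
Qed.


Lemma indeg_split v :
  indeg G v = #|[set u | arc G u v & u < v]| + #|[set u | Dr u v]|.
Proof.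
rewrite /indeg -(cardsID [set u : 'I_n | u < v]); congr (_ + _); apply: eq_card => u; rewrite !inE.
  case: (ltnP u v) => h.
    by rewrite (kind_lt h) (arc_lt h); case: (ed G u v); rewrite !etype_eqE.
  by case: (arc G u v); case: (_ != _).
case: (ltnP u v) => h /=.
  by rewrite /Dr ltnNge (ltnW h).
rewrite leq_eqVlt in h; case/orP: h => [/eqP e|h].
  by rewrite (ord_inj e) arc_irr /Dr ltnn.
by rewrite (kind_gt h) (arc_gt h) /Dr h /=; case: (ed G v u); rewrite !etype_eqE.
Qed.

Definition mu t := \max_(p : 'I_n * 'I_n | Dr p.1 p.2 && (pos p.2 < t)) (pos p.1).+1.

Lemma mu_ub t a c : Dr a c -> pos c < t -> pos a < mu t.
Proof. by move=> h1 h2; apply: (@leq_bigmax_cond _ _ (fun p => (pos p.1).+1) (a, c)); rewrite /= h1 h2. Qed.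

Lemma mu_lub t k : (forall a c, Dr a c -> pos c < t -> pos a < k) -> mu t <= k.
Proof. move=> h; apply/bigmax_leqP => -[a c] /= /andP[h1 h2]; exact: h h1 h2. Qed.

Lemma mu_gt t k : k < mu t -> exists a c, [/\ Dr a c, pos c < t & k <= pos a].
Proof.
move=> h.
case: (boolP [exists p : 'I_n * 'I_n, [&& Dr p.1 p.2, pos p.2 < t & k <= pos p.1]]).
  by case/existsP => -[a c] /and3P[h1 h2 h3]; exists a, c.
move/existsPn => H; move: h; rewrite ltnNge => /negP []; apply: mu_lub => a c h1 h2.
by move: (H (a, c)); rewrite /= h1 h2 /= -ltnNge.
Qed.

Lemma mu_mono t : mu t <= mu t.+1.
Proof. by apply: mu_lub => a c h1 h2; apply: mu_ub h1 _; apply: ltnW. Qed.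

Lemma mu0 : mu 0 = 0.
Proof. by apply/eqP; rewrite -leqn0; apply: mu_lub. Qed.

Lemma mu_le t : mu t <= t.
Proof.
apply: mu_lub => a c h1 h2; apply: ltn_trans h2.
by rewrite -arc_pos Dr_arc.
Qed.

Lemma mu_leS t : mu t.+1 <= t.
Proof.
apply: mu_lub => a c h1 h2; have := Dr_arc h1; rewrite arc_pos => h3.
rewrite ltnS in h2; exact: leq_trans h3 h2.
Qed.

Lemma JD a' c a v : Dr a' c -> pos a <= pos a' -> pos c <= pos v -> v < a -> Dr a v.
Proof.
move=> Dac la lc va.
rewrite leq_eqVlt in la; case/orP: la => [/eqP e|la].
  have ea := pos_inj e; subst a'.
  case: (eqVneq v c) => [evc|ne]; first by subst v.
  have cv : arc G c v.
    rewrite arc_pos ltn_neqAle lc andbT; apply/eqP => e'.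
    by move: ne; rewrite (pos_inj e') eqxx.
  exact: C2 Dac cv va.
have aa : arc G a a' by rewrite arc_pos.
case: (eqVneq v c) => [evc|ne]; first by subst v; apply: C1 Dac aa va.
have cv : arc G c v.
  rewrite arc_pos ltn_neqAle lc andbT; apply/eqP => e'.
  by move: ne; rewrite (pos_inj e') eqxx.
case: (ltnP c a) => h.
  exact: C2 (C1 Dac aa h) cv va.
have va' : v < a' by apply: leq_trans (leq_trans va h) (ltnW (Dr_lt Dac)).
exact: C1 (C2 Dac cv va') aa va.
Qed.

Lemma J s a v : pos a < mu s -> s <= (pos v).+1 -> v < a -> Dr a v.
Proof.
move=> /mu_gt [a' [c [h1 h2 h3]]] hs va.
by apply: JD h1 h3 _ va; rewrite -ltnS; apply: leq_trans h2 hs.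
Qed.

Definition Pset t := [set u | pos u < t].

Lemma S_sub t w : t <= pos w ->
  [set u in Pset t | u < w] \subset [set u | arc G u w & u < w].
Proof.
move=> tw; apply/subsetP => u; rewrite !inE => /andP[h1 ->]; rewrite andbT arc_pos.
exact: leq_trans h1 tw.
Qed.

Lemma F2b t vt : pos vt = t ->
  vt \in Zs (indeg G) (Pset t) (Pset (mu t.+1)).
Proof.
move=> pv; rewrite !inE pv ltnn /= indeg_split; apply/eqP; congr (_ + _); apply: eq_card => u; rewrite !inE.
  by rewrite arc_pos pv.
apply/idP/idP.
  by move=> h; rewrite (Dr_lt h) andbT; apply: mu_ub h _; rewrite pv.
by case/andP => h1 h2; apply: J h1 _ h2; rewrite pv.
Qed.

Lemma F2max t vt w : pos vt = t ->
  w \in Zs (indeg G) (Pset t) (Pset (mu t.+1)) -> w <= vt.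
Proof.
move=> pv; rewrite !inE -leqNgt => /andP[tw /eqP dw].
case: (eqVneq w vt) => [->//|ne].
rewrite leqNgt; apply/negP => vw.
have tw' : t < pos w.
  rewrite ltn_neqAle tw andbT; apply/eqP => e.
  by move: ne; rewrite (pos_inj (etrans (esym e) (esym pv))) eqxx.
move: dw; rewrite indeg_split => /eqP; apply/negP; rewrite neq_ltn; apply/orP; right.
apply: leq_trans (_ : _ <= #|[set u | arc G u w & u < w]| + #|[set u in Pset (mu t.+1) | w < u]|) _.
  rewrite ltn_add2r; apply: (card_ltS (x := vt)) (S_sub tw) _ _.
    by rewrite inE arc_pos pv tw' vw.
  by rewrite !inE pv ltnn.
rewrite leq_add2l; apply: subset_leq_card; apply/subsetP => u; rewrite !inE => /andP[h1 h2].
by apply: J h1 _ h2; rewrite ltnS.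
Qed.

Lemma F2a t vt m : pos vt = t -> mu t <= m -> m < mu t.+1 ->
  Zs (indeg G) (Pset t) (Pset m) = set0.
Proof.
move=> pv hm1 /mu_gt [a0 [c [Dac hc ha]]].
have ec : c = vt.
  apply: pos_inj; rewrite pv; apply/eqP; rewrite eqn_leq -ltnS hc /= leqNgt; apply/negP => lt.
  by have := leq_trans (mu_ub Dac lt) hm1; rewrite ltnNge ha.
subst c.
apply/setP => w; rewrite !inE; apply/negP => /andP[]; rewrite -leqNgt => tw /eqP.
rewrite indeg_split => dw.
have sub2 : [set u in Pset m | w < u] \subset [set u | Dr u w].
  apply/subsetP => u; rewrite !inE => /andP[h1 h2].
  by apply: JD Dac _ _ h2; [apply: ltnW; apply: leq_trans h1 ha | rewrite pv].
have a0n : a0 \notin [set u in Pset m | w < u] by rewrite !inE ltnNge ha.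
have S1 := subset_leq_card (S_sub tw).
have D1 := subset_leq_card sub2.
case: (eqVneq w vt) => [ewv|ne].
  subst w.
  have := card_ltS sub2 (x := a0); rewrite inE Dac => /(_ isT a0n) => lt.
  move/eqP: dw; apply/negP; rewrite neq_ltn; apply/orP; right.
  by apply: leq_trans (leq_add S1 lt); rewrite addnS.
have tw' : t < pos w.
  rewrite ltn_neqAle tw andbT; apply/eqP => e.
  by move: ne; rewrite (pos_inj (etrans (esym e) (esym pv))) eqxx.
case: (ltnP w vt) => h.
  have Daw : Dr a0 w by apply: C2 Dac _ (ltn_trans h (Dr_lt Dac)); rewrite arc_pos pv.
  have := card_ltS sub2 (x := a0); rewrite inE Daw => /(_ isT a0n) => lt.
  move/eqP: dw; apply/negP; rewrite neq_ltn; apply/orP; right.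
  by apply: leq_trans (leq_add S1 lt); rewrite addnS.
have vw : vt < w by rewrite ltn_neqAle h andbT eq_sym; apply/eqP => e; move: ne; rewrite (ord_inj e) eqxx.
have lt : #|[set u in Pset t | u < w]| < #|[set u | arc G u w & u < w]|.
  apply: (card_ltS (x := vt)) (S_sub tw) _ _.
    by rewrite inE arc_pos pv tw' vw.
  by rewrite !inE pv ltnn.
move/eqP: dw; apply/negP; rewrite neq_ltn; apply/orP; right.
by apply: leq_trans (leq_add lt D1); rewrite addSn.
Qed.
End Graph.

Lemma Dr_det n (G1 G2 : mgraph n) :
  acyclicb G1 -> triangle_condb G1 -> acyclicb G2 -> triangle_condb G2 ->
  (forall u, pos G1 u = pos G2 u) -> (forall i, indeg G1 i = indeg G2 i) ->
  forall a v, Dr G1 a v -> Dr G2 a v.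
Proof.
move=> a1 t1 a2 t2 pE hd a v D1; apply/negPn/negP => nD2.
have arcE u w : arc G1 u w = arc G2 u w by rewrite (arc_pos a1) (arc_pos a2) !pE.
have := hd v; rewrite !indeg_split.
have -> : [set u | arc G2 u v & u < v] = [set u | arc G1 u v & u < v].
  by apply/setP => u; rewrite !inE arcE.
move/eqP; rewrite eqn_add2l => /eqP hD.
set L := [set b : 'I_n | [&& v < b, arc G1 b v & pos G1 b <= pos G1 a]].
set L' := [set b : 'I_n | [&& v < b, arc G1 b v & pos G1 b < pos G1 a]].
have s1 : L \subset [set u | Dr G1 u v].
  apply/subsetP => b; rewrite !inE => /and3P[vb bv]; rewrite leq_eqVlt => /orP[/eqP e|lt].
    by rewrite (pos_inj a1 e).
  by apply: (C1 a1 t1 D1) vb; rewrite (arc_pos a1).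
have s2 : [set u | Dr G2 u v] \subset L'.
  apply/subsetP => b; rewrite !inE => D2.
  rewrite (Dr_lt D2) arcE (Dr_arc D2) /= ltnNge; apply/negP; rewrite leq_eqVlt => /orP[/eqP e|lt].
    by move: nD2; rewrite (pos_inj a1 e) D2.
  by move: nD2; rewrite (C1 a2 t2 D2 _ (Dr_lt D1)) // (arc_pos a2) -!pE.
have s3 : #|L'| < #|L|.
  apply: (card_ltS (x := a)).
  - by apply/subsetP => b; rewrite !inE => /and3P[-> -> /ltnW ->].
  - by rewrite !inE (Dr_lt D1) (Dr_arc D1) leqnn.
  - by rewrite !inE ltnn !andbF.
have := leq_ltn_trans (subset_leq_card s2) (leq_trans s3 (subset_leq_card s1)).
by rewrite hD ltnn.
Qed.

Lemma etype3 (x y : etype) : x != Up -> y != Up -> (x == Down) = (y == Down) -> x = y.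
Proof. by case: x; case: y; rewrite !etype_eqE. Qed.

Lemma inj_main n (G1 G2 : mgraph n) : parking_graph G1 -> parking_graph G2 ->
  (forall i, indeg G1 i = indeg G2 i) -> G1 = G2.
Proof.
move=> /andP[a1 t1] /andP[a2 t2] hd.
have claim : forall t, t <= n ->
    (forall u, (pos G1 u < t) || (pos G2 u < t) -> pos G1 u = pos G2 u) /\ mu G1 t = mu G2 t.
  elim => [_|t IH tn]; first by split; [move=> u; rewrite !ltn0 | rewrite !mu0].
  have [H hm] := IH (ltnW tn).
  have PE m : m <= t -> Pset G1 m = Pset G2 m.
    move=> mt; apply/setP => u; rewrite !inE; apply/idP/idP => h.
      by rewrite -H // (leq_trans h mt).
    by rewrite H // (leq_trans h mt) orbT.
  have [v1 pv1] := pos_onto a1 tn.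
  have [v2 pv2] := pos_onto a2 tn.
  have Zeq m : m <= t ->
      Zs (indeg G1) (Pset G1 t) (Pset G1 m) = Zs (indeg G2) (Pset G2 t) (Pset G2 m).
    by move=> mt; rewrite !PE // (Zs_eq _ _ hd).
  have mle1 := mu_leS a1 t; have mle2 := mu_leS a2 t.
  have em : mu G1 t.+1 = mu G2 t.+1.
    case: (ltngtP (mu G1 t.+1) (mu G2 t.+1)) => // h; exfalso.
      have Z0 : Zs (indeg G2) (Pset G2 t) (Pset G2 (mu G1 t.+1)) = set0.
        by apply: (F2a a2 t2 pv2) h; rewrite -hm mu_mono.
      by have := F2b a1 t1 pv1; rewrite (Zeq _ mle1) Z0 inE.
    have Z0 : Zs (indeg G1) (Pset G1 t) (Pset G1 (mu G2 t.+1)) = set0.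
      by apply: (F2a a1 t1 pv1) h; rewrite hm mu_mono.
    by have := F2b a2 t2 pv2; rewrite -(Zeq _ mle2) Z0 inE.
  have v12 : v1 = v2.
    apply/ord_inj/eqP; rewrite eqn_leq; apply/andP; split.
      apply: (F2max (w := v1) a2 t2 pv2); rewrite -em -(Zeq _ mle1).
      have X := F2b a1 t1 pv1; exact X.
    apply: (F2max (w := v2) a1 t1 pv1); rewrite (Zeq _ mle1) em.
    have X := F2b a2 t2 pv2; exact X.
  split; last by [].
  move=> u; case: (boolP ((pos G1 u < t) || (pos G2 u < t))) => [h _|]; first exact: H.
  rewrite negb_or -!leqNgt => /andP[l1 l2]; rewrite !ltnS => /orP[h|h].
    have e : pos G1 u = t by apply/eqP; rewrite eqn_leq h l1.
    by rewrite e (pos_inj a1 (etrans e (esym pv1))) v12 pv2.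
  have e : pos G2 u = t by apply/eqP; rewrite eqn_leq h l2.
  by rewrite e (pos_inj a2 (etrans e (esym pv2))) -v12 pv1.
have pE u : pos G1 u = pos G2 u.
  by have [H _] := claim n (leqnn n); apply: H; rewrite pos_ltn.
have arcE u w : arc G1 u w = arc G2 u w by rewrite (arc_pos a1) (arc_pos a2) !pE.
have DE a v : Dr G1 a v = Dr G2 a v.
  by apply/idP/idP; [apply: (Dr_det a1 t1 a2 t2) | apply: (Dr_det a2 t2 a1 t1)] => // u; rewrite pE.
apply/ffunP => p.
have : ed G1 (val p).1 (val p).2 = ed G2 (val p).1 (val p).2.
  have jk : (val p).1 < (val p).2 := valP p.
  case A1: (arc G1 (val p).1 (val p).2).
    have := A1; rewrite arcE !(arc_lt _ jk) => /eqP ->.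
    by move: A1; rewrite (arc_lt _ jk) => /eqP ->.
  have := A1; rewrite arcE => A2.
  move: A1 A2; rewrite !(arc_lt _ jk) => /negbT n1 /negbT n2; apply: etype3 n1 n2 _.
  by have := DE (val p).2 (val p).1; rewrite /Dr jk.
by rewrite /ed -surjective_pairing valK.
Qed.

Lemma partA n (G : mgraph n) : parking_graph G -> parking_function (phi G).
Proof.
case/andP => aG tG; apply/andP; split.
  by apply/allP => a /tnthP [i ->]; rewrite tnth_mktuple.
apply/forallP => k; apply: sort_nth_le; rewrite count_tuple.
have kn : k.+1 <= n := ltn_ord k.
rewrite -{1}(card_pos aG kn); apply: subset_leq_card; apply/subsetP => u.
rewrite !inE tnth_mktuple ltnS => h; apply: leq_trans h.
by apply: subset_leq_card; apply/subsetP => j; rewrite !inE => /andP[].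
Qed.

Lemma find_m (Q : nat -> bool) a b : a <= b -> Q a ->
  exists m, [/\ a <= m, m <= b, Q m & (m = b) \/ ~~ Q m.+1].
Proof.
move=> ab; move: {2}(b - a) (erefl (b - a)) => k; elim: k a ab => [|k IH] a ab e Qa.
  have eab : a = b by apply/eqP; rewrite eqn_leq ab /= -subn_eq0 e.
  by exists a; split => //; left.
case Qa1: (Q a.+1); last by exists a; split => //; right; rewrite Qa1.
have ab1 : a < b by rewrite -subn_gt0 e.
have e1 : b - a.+1 = k by rewrite subnS e.
have [m [h1 h2 h3 h4]] := IH a.+1 ab1 e1 Qa1.
by exists m; split => //; apply: ltnW.
Qed.

Section Constr.
Variable n : nat.
Variable d : 'I_n -> nat.
Hypothesis hPF : forall t, t < n -> t < #|[set v | d v <= t]|.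
Implicit Types (A : {set 'I_n}) (ps mm : 'I_n -> nat).

Definition cs A v := #|[set u in A | u < v]|.
Definition clm A ps m v := #|[set u in A | (ps u < m) && (v < u)]|.

Record Inv t A ps mm mc : Prop := {
  i1 : #|A| = t;
  i2 : forall u, u \in A -> ps u < t;
  i3 : {in A &, injective ps};
  i4 : mc <= t;
  i5 : forall u, u \in A -> mm u <= mc;
  i6 : forall u, u \in A -> mm u <= ps u;
  i7 : forall u v, u \in A -> v \in A -> ps u < ps v -> mm u <= mm v;
  i8 : forall v, v \in A -> d v = #|[set u in A | (ps u < ps v) && (u < v)]| + clm A ps (mm v) v;
  i9 : forall v, v \notin A -> cs A v + clm A ps mc v <= d v }.

Lemma card_set0P (P : pred 'I_n) : #|[set u in (set0 : {set 'I_n}) | P u]| = 0.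
Proof. by apply: eq_card0 => u; rewrite !inE. Qed.

Lemma inv0 : Inv 0 set0 (fun _ => 0) (fun _ => 0) 0.
Proof.
split.
- by rewrite cards0.
- by move=> u; rewrite inE.
- by move=> u; rewrite inE.
- by [].
- by move=> u; rewrite inE.
- by move=> u; rewrite inE.
- by move=> u w; rewrite inE.
- by move=> w; rewrite inE.
- by move=> w _; rewrite /cs /clm !card_set0P.
Qed.

Lemma clm_mono A ps m m' v : m <= m' -> clm A ps m v <= clm A ps m' v.
Proof.
move=> mm'; rewrite /clm; apply: subset_leq_card; apply/subsetP => u; rewrite !inE => /andP[-> /andP[h ->]].
by rewrite (leq_trans h mm').
Qed.

Lemma clmS A ps m v : {in A &, injective ps} -> clm A ps m.+1 v <= (clm A ps m v).+1.
Proof.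
move=> inj; rewrite /clm.
apply: leq_trans (_ : _ <= #|[set u in A | (ps u < m) && (v < u)] :|: [set u in A | ps u == m]|) _.
  apply: subset_leq_card; apply/subsetP => u; rewrite !inE => /andP[-> /andP[h ->]].
  by rewrite ltnS leq_eqVlt in h; case/orP: h => [->|->]; rewrite ?orbT.
rewrite cardsU; apply: leq_trans (leq_subr _ _) _; rewrite -[X in _ <= X]addn1 leq_add2l.
apply/card_le1_eqP => x y; rewrite !inE => /andP[xA /eqP px] /andP[yA /eqP py].
by apply: inj => //; rewrite px py.
Qed.

Lemma card_U1 A v (P : pred 'I_n) : v \notin A ->
  #|[set u in v |: A | P u]| = P v + #|[set u in A | P u]|.
Proof.
move=> vA; case Pv: (P v).
  have -> : [set u in v |: A | P u] = v |: [set u in A | P u].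
    by apply/setP => u; rewrite !inE; case: (eqVneq u v) => [->|] //=; rewrite Pv.
  by rewrite cardsU1 inE (negbTE vA).
rewrite add0n; apply: eq_card => u; rewrite !inE; case: (eqVneq u v) => [->|] //=.
by rewrite Pv (negbTE vA) andbF.
Qed.

Lemma card_in_eq A (P P' : pred 'I_n) : {in A, P =1 P'} ->
  #|[set u in A | P u]| = #|[set u in A | P' u]|.
Proof.
move=> e; apply: eq_card => u; rewrite !inE.
by case uA: (u \in A) => //=; rewrite e.
Qed.

Lemma step t A ps mm mc : t < n -> Inv t A ps mm mc ->
  exists A' ps' mm' mc', Inv t.+1 A' ps' mm' mc'.
Proof.
move=> tn I.
set Q := fun m => [forall v, (v \notin A) ==> (cs A v + clm A ps m v <= d v)].
have Qmc : Q mc by apply/forallP => v; apply/implyP; apply: (i9 I).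
have [m' [hm1 hm2 Qm hm4]] := find_m (i4 I) Qmc.
have QmP v : v \notin A -> cs A v + clm A ps m' v <= d v.
  by move=> vA; move/forallP: Qm => /(_ v); rewrite vA.
set Z := [set v | (v \notin A) && (d v == cs A v + clm A ps m' v)].
have [v0 v0Z] : exists v0, v0 \in Z.
  case: hm4 => [em|nQ].
    subst m'.
    have : ~~ ([set v | d v <= t] \subset A).
      apply/negP => /subset_leq_card; rewrite (i1 I) leqNgt; move/negP; apply.
      exact: hPF.
    case/subsetPn => v; rewrite inE => dv vA; exists v; rewrite inE vA /=.
    have Ht : cs A v + clm A ps t v = t.
      have e0 : cs A v = #|A :&: [set u : 'I_n | u < v]|.
        by apply: eq_card => u; rewrite !inE andbC.
      have e1 : clm A ps t v = #|A :\: [set u : 'I_n | u < v]|.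
        rewrite /clm; apply: eq_card => u; rewrite !inE.
        case uA: (u \in A); rewrite ?andbF ?andbT //= (i2 I uA) /=.
        case: (eqVneq u v) => [euv|ne]; first by move: vA; rewrite -euv uA.
        have nvu : (v : nat) != u by apply/eqP => e; move: ne; rewrite (ord_inj e) eqxx.
        by rewrite ltn_neqAle nvu -leqNgt.
      by rewrite e0 e1 cardsID (i1 I).
    by rewrite Ht eqn_leq dv /= -{1}Ht; apply: QmP.
  move/forallPn: nQ => [v]; rewrite negb_imply -ltnNge => /andP[vA lt].
  exists v; rewrite inE vA eqn_leq QmP // andbT.
  have := leq_trans lt (leq_add (leqnn _) (clmS m' v (i3 I))).
  by rewrite addnS ltnS.
set v := [arg max_(i > v0 in Z) (i : nat)].
have [vZ vmax] : v \in Z /\ forall w, w \in Z -> w <= v.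
  by rewrite /v; case: (arg_maxnP (fun i : 'I_n => (i : nat)) v0Z) => x xZ h; split => // w /h.
move: (vZ); rewrite inE => /andP[vA /eqP dv].
set ps' := fun u => if u == v then t else ps u.
set mm' := fun u => if u == v then m' else mm u.
exists (v |: A), ps', mm', m'.
have uneq u : u \in A -> (u == v) = false.
  by move=> uA; apply/eqP => e; move: vA; rewrite -e uA.
have psA u : u \in A -> ps' u = ps u by move=> uA; rewrite /ps' uneq.
have mmA u : u \in A -> mm' u = mm u by move=> uA; rewrite /mm' uneq.
have psv : ps' v = t by rewrite /ps' eqxx.
have mmv : mm' v = m' by rewrite /mm' eqxx.
have mmt u : u \in A -> mm u <= t by move=> uA; apply: leq_trans (i5 I uA) (i4 I).
split.
- by rewrite cardsU1 vA (i1 I).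
- move=> u; rewrite in_setU1 => /orP[/eqP->|uA]; first by rewrite psv.
  by rewrite psA // ltnS ltnW // (i2 I uA).
- move=> u w; rewrite !in_setU1 => /orP[/eqP->|uA] /orP[/eqP->|wA] //.
  + by rewrite psv (psA _ wA) => e; have := i2 I wA; rewrite -e ltnn.
  + by rewrite psv (psA _ uA) => e; have := i2 I uA; rewrite e ltnn.
  + by rewrite !psA //; apply: (i3 I).
- exact: leq_trans hm2 (leqnSn t).
- move=> u; rewrite in_setU1 => /orP[/eqP->|uA]; first by rewrite mmv.
  by rewrite mmA //; apply: leq_trans (i5 I uA) hm1.
- move=> u; rewrite in_setU1 => /orP[/eqP->|uA]; first by rewrite mmv psv.
  by rewrite mmA // psA //; apply: (i6 I).
- move=> u w; rewrite !in_setU1 => /orP[/eqP->|uA] /orP[/eqP->|wA].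
  + by [].
  + by rewrite psv (psA _ wA) => h; have := i2 I wA; rewrite ltnNge (ltnW h).
  + by rewrite mmv mmA // => _; apply: leq_trans (i5 I uA) hm1.
  + by rewrite !mmA // !psA //; apply: (i7 I).
- move=> w; rewrite in_setU1 => /orP[/eqP->|wA].
  + rewrite /clm !card_U1 // psv mmv !ltnn !andbF /= !add0n dv /cs /clm; congr (_ + _).
      by apply: card_in_eq => u uA; rewrite /= psA // (i2 I uA).
    by apply: card_in_eq => u uA; rewrite /= psA.
  + rewrite /clm !card_U1 // (psA w wA) (mmA w wA) psv.
    have tw : t < ps w = false by apply/negbTE; rewrite -leqNgt ltnW // (i2 I wA).
    have tm : t < mm w = false by apply/negbTE; rewrite -leqNgt mmt.
    rewrite tw tm /= !add0n (i8 I wA); congr (_ + _).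
      by apply: card_in_eq => u uA; rewrite /= psA.
    by apply: card_in_eq => u uA; rewrite /= psA.
- move=> w; rewrite in_setU1 negb_or => /andP[wv wA].
  have tm : t < m' = false by apply/negbTE; rewrite -leqNgt.
  rewrite /cs /clm !card_U1 // psv tm /= add0n.
  have -> : #|[set u in A | (ps' u < m') && (w < u)]| = clm A ps m' w.
    by apply: card_in_eq => u uA; rewrite /= psA.
  case: (ltnP v w) => h /=.
    have wZ : w \notin Z.
      by apply/negP => /vmax; rewrite leqNgt h.
    move: wZ; rewrite inE wA /= => ne.
    rewrite add1n addSn -/(cs A w) ltn_neqAle eq_sym ne /=; exact: QmP.
  by rewrite add0n; apply: QmP.
Qed.



Lemma inv_ex t : t <= n -> exists A ps mm mc, Inv t A ps mm mc.
Proof.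
elim: t => [_|t IH tn]; first by exists set0, (fun _ => 0), (fun _ => 0), 0; exact: inv0.
have [A [ps [mm [mc I]]]] := IH (ltnW tn).
exact: step tn I.
Qed.

Definition mkG ps mm : mgraph n :=
  [ffun p : pairs n => if ps (val p).1 < ps (val p).2 then Up
                      else if ps (val p).2 < mm (val p).1 then Down else Downish].

Lemma ed_mkG ps mm (j k : 'I_n) : j < k ->
  ed (mkG ps mm) j k = if ps j < ps k then Up else if ps k < mm j then Down else Downish.
Proof. by move=> jk; rewrite /ed (insubT (fun p : 'I_n * 'I_n => p.1 < p.2) (sT := pairs n) (x := (j, k)) jk) ffunE. Qed.

Variables (A : {set 'I_n}) (ps mm : 'I_n -> nat) (mc : nat).
Hypothesis I : Inv n A ps mm mc.

Lemma inA u : u \in A.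
Proof.
have : A == setT by rewrite eqEcard subsetT cardsT card_ord (i1 I) leqnn.
by move/eqP ->; rewrite inE.
Qed.

Lemma ps_inj : injective ps.
Proof. by move=> u v e; apply: (i3 I) => //; apply: inA. Qed.

Let G := mkG ps mm.

Lemma arc_mk u v : arc G u v = (ps u < ps v).
Proof.
case: (ltngtP u v) => h.
- rewrite (arc_lt _ h) ed_mkG //; case: ifP => h2; first by rewrite etype_eqE.
  by case: ifP; rewrite etype_eqE.
- rewrite (arc_gt _ h) ed_mkG //; case: ifP => h2.
    by rewrite etype_eqE /= ltnNge (ltnW h2).
  have -> : ps u < ps v.
    rewrite ltn_neqAle leqNgt h2 andbT; apply/eqP => /ps_inj e.
    by move: h; rewrite e ltnn.
  by case: ifP; rewrite etype_eqE.
- by rewrite (ord_inj h) arc_irr ltnn.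
Qed.

Lemma connect_mk u v : connect (arc G) u v -> ps u <= ps v.
Proof.
case/connectP => p pp ->; elim: p u pp => [//|w p IH u /= /andP[uw pw]].
by move: uw; rewrite arc_mk => /ltnW h; apply: leq_trans h (IH w pw).
Qed.

Lemma kind_mk u v : ps u < ps v ->
  kind G u v = if u < v then Up else if ps u < mm v then Down else Downish.
Proof.
move=> h; case: (ltngtP u v) => h2.
- by rewrite (kind_lt _ h2) ed_mkG // h.
- by rewrite (kind_gt _ h2) ed_mkG // ltnNge (ltnW h).
- by move: h; rewrite (ord_inj h2) ltnn.
Qed.

Lemma mk_parking : parking_graph G.
Proof.
apply/andP; split.
  apply/forallP => u; apply/forallP => v; apply/implyP; rewrite arc_mk => h.
  by apply/negP => /connect_mk; rewrite leqNgt h.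
apply/forallP => a; apply/forallP => b; apply/forallP => c.
apply/implyP; rewrite !arc_mk => /and3P[ab bc ac].
have Dk x y : ps x < ps y -> kind G x y = Down -> ps x < mm y.
  by move=> h; rewrite (kind_mk h); case: ifP => // _; case: ifP.
have Sk : kind G a c = Downish -> ~~ (ps a < mm c).
  by rewrite (kind_mk ac); case: ifP => // _; case: ifP => // ->.
apply/implyP => hD; apply/implyP => _; apply/negP => /eqP hS.
move/negP: (Sk hS); apply.
have mbc : mm b <= mm c by apply: (i7 I) => //; apply: inA.
move: hD; rewrite !inE => /or3P[/eqP e|/eqP e|/eqP e].
- exact: leq_trans (Dk _ _ ab (esym e)) mbc.
- exact: ltn_trans ab (Dk _ _ bc (esym e)).
- by move: hS; rewrite -e.
Qed.

Lemma indeg_mk v : indeg G v = d v.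
Proof.
rewrite indeg_split (i8 I (inA v)); congr (_ + _); apply: eq_card => u; rewrite !inE.
  by rewrite arc_mk inA.
rewrite /Dr inA /=; case: (ltnP v u) => h /=; last by rewrite andbF.
rewrite andbT ed_mkG // ltnNge.
have mv := i6 I (inA v).
case: (ltnP (ps u) (mm v)) => h2 /=.
  by rewrite (ltnW (leq_trans h2 mv)) etype_eqE.
by case: (leqP (ps u) (ps v)) => _; rewrite etype_eqE.
Qed.
End Constr.

Lemma partC n (x : n.-tuple nat) : parking_function x ->
  exists2 G : mgraph n, parking_graph G & phi G = x.
Proof.
case/andP => /allP xpos /forallP hx.
pose d := fun v : 'I_n => (tnth x v).-1.
have hPF : forall t, t < n -> t < #|[set v | d v <= t]|.
  move=> t tn; have h := hx (Ordinal tn).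
  have sz : t < size x by rewrite size_tuple.
  have := sort_nth_count sz h; rewrite count_tuple => lt.
  apply: leq_trans lt _; apply: subset_leq_card; apply/subsetP => v; rewrite !inE /d.
  by case: (tnth x v).
have [A [ps [mm [mc I]]]] := inv_ex hPF (leqnn n).
exists (mkG ps mm); first exact: mk_parking I.
apply: eq_from_tnth => i; rewrite tnth_mktuple (indeg_mk I) /d prednK //.
by apply: xpos; apply: mem_tnth.
Qed.

Theorem theorem2p2 (n : nat) :
  (forall G : mgraph n, parking_graph G -> parking_function (phi G)) /\
  {in [pred G : mgraph n | parking_graph G] &, injective (@phi n)} /\
  (forall x : n.-tuple nat, parking_function x ->
     exists2 G : mgraph n, parking_graph G & phi G = x).
Proof.
split; first exact: partA.
split; last exact: partC.
move=> G1 G2; rewrite !inE => p1 p2 e; apply: inj_main p1 p2 _ => i.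
by have := congr1 (fun t => tnth t i) e; rewrite !tnth_mktuple => -[].
Qed.
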